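(* Let $S_f=\{f_i\ge 0: i=1,\ldots,m_1\}$ and $S_g=\{g_i\ge0: i=1,\ldots,m_2\}$ be two pure inequality sets in the variables $\mathbf{x}=(x_1,\ldots,x_n)$, and let $S_{f'}$ and $S_{g'}$ be minimal characterization sets of $S_f$ and $S_g$ respectively. If $S_f$ and $S_g$ are equivalent, then $S_{f'}$ and $S_{g'}$ are trivially equivalent.
   Context: An inequality set is a finite set $S=\{f_i\ge 0: i=1,\ldots,m\}$ with each $f_i$ a nonzero homogeneous linear polynomial in $\mathbf{x}$ with real coefficients; its solutions are the points of $\mathbb{R}^n$ satisfying all inequalities; a subset of $S$ is an inequality set whose polynomials form a subset of $\{f_1,\ldots,f_m\}$. The equality $f_k=0$ is an implied equality of $S$ if $f_k(\mathbf{x})=0$ for every solution of $S$; $S$ is pure if it has no implied equalities. Inequalities $f_1\ge0,\ldots,f_k\ge0$ imply $f\ge0$ if every $\mathbf{x}$ satisfying the former satisfies $f(\mathbf{x})\ge0$; an inequality of a set is redundant if implied by the other inequalities of the set. Two inequality sets are equivalent if they have the same solution set. A subset $S'$ of $S$ is a minimal characterization set of $S$ if $S'$ is equivalent to $S$ and contains no redundant inequality. Two inequalities $f\ge0$ and $g\ge 0$ are trivially equivalent if $f=c\,g$ for some real $c>0$. Two inequality sets $S_f, S_g$ are trivially equivalent if they have the same number of inequalities, every inequality of $S_f$ is trivially equivalent to some inequality of $S_g$, and every inequality of $S_g$ is trivially equivalent to some inequality of $S_f$. *)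

(* Defs.v *)
From HB Require Import structures.
From mathcomp Require Import all_boot all_order all_algebra.
From mathcomp Require Import finmap.
From mathcomp Require Import reals.
Set Implicit Arguments. Unset Strict Implicit. Unset Printing Implicit Defensive.
Import Order.TTheory GRing.Theory Num.Theory.
Local Open Scope ring_scope.
Local Open Scope fset_scope.

Section Ineq.
Variables (R : realType) (n : nat).

(* A homogeneous linear polynomial a_1 x_1 + ... + a_n x_n is represented by
   its coefficient vector a : 'rV[R]_n. *)
Definition lin_eval (f x : 'rV[R]_n) : R := \sum_(i < n) f 0 i * x 0 i.

(* an inequality set: a finite set of nonzero homogeneous linear forms f,
   each standing for the inequality f >= 0 *)
Definition ineq_set (S : {fset 'rV[R]_n}) : Prop := forall f, f \in S -> f != 0.

Definition solution (S : {fset 'rV[R]_n}) (x : 'rV[R]_n) : Prop :=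
  forall f, f \in S -> 0 <= lin_eval f x.

Definition implied_equality (S : {fset 'rV[R]_n}) (f : 'rV[R]_n) : Prop :=
  f \in S /\ forall x, solution S x -> lin_eval f x = 0.

Definition pure (S : {fset 'rV[R]_n}) : Prop :=
  forall f, ~ implied_equality S f.

Definition implies (S : {fset 'rV[R]_n}) (f : 'rV[R]_n) : Prop :=
  forall x, solution S x -> 0 <= lin_eval f x.

Definition redundant (S : {fset 'rV[R]_n}) (f : 'rV[R]_n) : Prop :=
  f \in S /\ implies (S `\ f) f.

Definition equivalent (S T : {fset 'rV[R]_n}) : Prop :=
  forall x, solution S x <-> solution T x.

Definition minimal_characterization (S' S : {fset 'rV[R]_n}) : Prop :=
  [/\ S' `<=` S, equivalent S' S & forall f, ~ redundant S' f].

Definition triv_equiv_ineq (f g : 'rV[R]_n) : Prop :=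
  exists c : R, 0 < c /\ f = c *: g.

Definition triv_equiv_set (S T : {fset 'rV[R]_n}) : Prop :=
  [/\ #|` S| = #|` T|,
      forall f, f \in S -> exists2 g, g \in T & triv_equiv_ineq f g
    & forall g, g \in T -> exists2 f, f \in S & triv_equiv_ineq g f].

End Ineq.

(* Main.v *)
Require Import Defs.
From HB Require Import structures.
From mathcomp Require Import all_boot all_order all_algebra.
From mathcomp Require Import finmap.
From mathcomp Require Import reals.
From mathcomp Require Import boolp.
From mathcomp Require Import lra.
Set Implicit Arguments. Unset Strict Implicit. Unset Printing Implicit Defensive.
Import Order.TTheory GRing.Theory Num.Theory.
Local Open Scope fset_scope.
Local Open Scope ring_scope.

Section L.
Variables (R : realType) (n : nat).
Implicit Types (f g h x y w z : 'rV[R]_n).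

Lemma linD f x y : lin_eval f (x + y) = lin_eval f x + lin_eval f y.
Proof. by rewrite /lin_eval -big_split; apply: eq_bigr => i _; rewrite mxE mulrDr. Qed.

Lemma linZ f a x : lin_eval f (a *: x) = a * lin_eval f x.
Proof. by rewrite /lin_eval mulr_sumr; apply: eq_bigr => i _; rewrite mxE mulrCA. Qed.

Lemma linN f x : lin_eval f (- x) = - lin_eval f x.
Proof. by rewrite -scaleN1r linZ mulN1r. Qed.

Lemma linZl f a x : lin_eval (a *: f) x = a * lin_eval f x.
Proof. by rewrite /lin_eval mulr_sumr; apply: eq_bigr => i _; rewrite mxE mulrA. Qed.

Lemma lin_self_gt0 f : f != 0 -> 0 < lin_eval f f.
Proof.
move=> fn0; rewrite /lin_eval lt_def; apply/andP; split; last first.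
  by apply: sumr_ge0 => i _; rewrite -expr2 sqr_ge0.
apply: contra fn0 => /eqP /psumr_eq0P H; apply/eqP/matrixP => i j.
rewrite (ord1 i) mxE; apply/eqP; rewrite -sqrf_eq0 expr2; apply/eqP.
by apply: H => // k _; rewrite -expr2 sqr_ge0.
Qed.

Lemma lin_delta f j : lin_eval f (delta_mx 0 j) = f 0 j.
Proof.
rewrite /lin_eval (bigD1 j) //= big1 ?addr0; first by rewrite mxE !eqxx mulr1.
by move=> i /negbTE ij; rewrite mxE ij andbF mulr0.
Qed.

Lemma farkas1 f g : f != 0 -> g != 0 ->
  (forall w, 0 <= lin_eval f w -> 0 <= lin_eval g w) ->
  exists c, 0 < c /\ g = c *: f.
Proof.
move=> fn0 gn0 H.
have ff := lin_self_gt0 fn0.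
set c := lin_eval g f / lin_eval f f.
have gw : forall w, lin_eval g w = c * lin_eval f w.
  move=> w; set u := w - (lin_eval f w / lin_eval f f) *: f.
  have fu : lin_eval f u = 0.
    by rewrite /u linD linN linZ mulfVK ?subrr // gt_eqF.
  have gu : lin_eval g u = 0.
    apply/eqP; rewrite eq_le; apply/andP; split.
      by rewrite -oppr_ge0 -linN; apply: H; rewrite linN fu oppr0.
    by apply: H; rewrite fu.
  move: gu; rewrite /u linD linN linZ /c => /eqP; rewrite subr_eq0 => /eqP ->.
  by rewrite mulrC mulrA mulrAC.
have geq : g = c *: f.
  by apply/matrixP => i j; rewrite (ord1 i) mxE -!lin_delta gw.
exists c; split => //.
rewrite lt_def; apply/andP; split.
  by apply: contra gn0 => /eqP c0; rewrite geq c0 scale0r.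
by rewrite /c divr_ge0 // ?H // ltW.
Qed.

Lemma bigM (U : {fset 'rV[R]_n}) z w :
  (forall g, g \in U -> 0 <= lin_eval g z) ->
  exists M, forall g, g \in U -> 0 < lin_eval g z ->
     0 <= lin_eval g (M *: z + w).
Proof.
move=> Hz.
exists (\sum_(h <- U) `|lin_eval h w| / lin_eval h z) => g gU gz.
rewrite linD linZ.
have le : `|lin_eval g w| / lin_eval g z <=
    \sum_(h <- U) `|lin_eval h w| / lin_eval h z.
  rewrite (bigD1_seq g) //=; last exact: fset_uniq.
  rewrite lerDl; rewrite big_seq_cond; apply: sumr_ge0 => h /andP[hU _].
  by rewrite divr_ge0 // Hz.
have : `|lin_eval g w| <= (\sum_(h <- U) `|lin_eval h w| / lin_eval h z) * lin_eval g z.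
  by rewrite -ler_pdivrMr.
move: (ler_norm (- lin_eval g w)); rewrite normrN => h1 h2.
by rewrite -lerBlDr sub0r; apply: le_trans h1 h2.
Qed.


Lemma facet (S T : {fset 'rV[R]_n}) f :
  (forall h, h \in S -> h != 0) -> (forall g, g \in T -> g != 0) ->
  (exists y, forall h, h \in S -> 0 < lin_eval h y) ->
  (forall h, ~ redundant S h) ->
  (forall x, solution S x <-> solution T x) ->
  f \in S -> exists2 g, g \in T & triv_equiv_ineq f g.
Proof.
move=> Sn0 Tn0 [y Hy] Hirr Heq fS.
have [x0 [Hx0 fx0]] : exists x0, solution (S `\ f) x0 /\ lin_eval f x0 < 0.
  apply: contrapT => Hn; apply: (Hirr f); split => // x Hx.
  rewrite leNgt; apply/negP => fx; apply: Hn; by exists x.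
set a := lin_eval f y; set b := - lin_eval f x0.
have a0 : 0 < a by apply: Hy.
have b0 : 0 < b by rewrite oppr_gt0.
set z := a *: x0 + b *: y.
have fz : lin_eval f z = 0.
  rewrite /z linD !linZ /b /a mulNr mulrC; exact: subrr.
have hz : forall h, h \in S -> h != f -> 0 < lin_eval h z.
  move=> h hS hf; rewrite /z linD !linZ.
  have : 0 <= lin_eval h x0 by apply: Hx0; rewrite in_fsetD1 hf hS.
  have := Hy h hS => p q.
  by apply: ltr_wpDl; [rewrite mulr_ge0 // ltW | rewrite mulr_gt0].
have zS : solution S z.
  move=> h hS; have [->|hf] := eqVneq h f; first by rewrite fz.
  exact/ltW/hz.
have zT := (Heq z).1 zS.
case: (pselect (exists2 g, g \in T & lin_eval g z = 0)) => [[g gT gz]|Hn].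
  exists g => //.
  have [c [c0 ->]] : exists c, 0 < c /\ g = c *: f.
    apply: farkas1; [exact: Sn0 | exact: Tn0 |] => w fw.
    have [M HM] := bigM w (fun h hS => zS h hS).
    have : solution S (M *: z + w).
      move=> h hS; have [->|hf] := eqVneq h f.
        by rewrite linD linZ fz mulr0 add0r.
      exact: HM _ hS (hz _ hS hf).
    move=> /(Heq _).1 /(_ g gT); by rewrite linD linZ gz mulr0 add0r.
  exists c^-1; split; first by rewrite invr_gt0.
  by rewrite scalerA mulVf ?scale1r // gt_eqF.
exfalso.
have Tz : forall g, g \in T -> 0 < lin_eval g z.
  move=> g gT; rewrite lt_def zT // andbT; apply/eqP => gz; apply: Hn; by exists g.
have [M HM] := bigM (- f) (fun g gT => zT g gT).
have : solution T (M *: z - f) by move=> g gT; apply: HM _ gT (Tz _ gT).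
move=> /(Heq _).2 /(_ f fS); rewrite linD linZ fz mulr0 add0r linN oppr_ge0.
by rewrite leNgt lin_self_gt0 // Sn0.
Qed.

Lemma pure_pt (S : {fset 'rV[R]_n}) : pure S ->
  exists y, forall h, h \in S -> 0 < lin_eval h y.
Proof.
move=> Hp.
have H : forall h, exists x, h \in S -> solution S x /\ 0 < lin_eval h x.
  move=> h; apply: contrapT => Hn; apply: (Hp h); split.
    apply: contrapT => hS; apply: Hn; exists 0 => /hS [].
  move=> x Hx; apply/eqP; rewrite eq_le Hx ?andbT; last first.
    apply: contrapT => hS; apply: Hn; exists 0 => /hS [].
  rewrite leNgt; apply/negP => hx; apply: Hn; by exists x.
have [xf Hxf] := choice H.
exists (\sum_(k <- S) xf k) => h hS.
have lin_sum : forall (r : seq 'rV[R]_n), lin_eval h (\sum_(k <- r) xf k)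
    = \sum_(k <- r) lin_eval h (xf k).
  elim => [|k r IH]; first by rewrite !big_nil /lin_eval big1 // => i _; rewrite mxE mulr0.
  by rewrite !big_cons linD IH.
rewrite lin_sum (bigD1_seq h) //=; last exact: fset_uniq.
apply: ltr_pwDl; first by have [] := Hxf h hS.
rewrite big_seq_cond; apply: sumr_ge0 => k /andP[kS _].
by have [+ _] := Hxf k kS; apply.
Qed.

End L.

Theorem theorem4 (R : realType) (n : nat) (Sf Sg Sf' Sg' : {fset 'rV[R]_n}) :
  ineq_set Sf -> ineq_set Sg -> pure Sf -> pure Sg ->
  minimal_characterization Sf' Sf -> minimal_characterization Sg' Sg ->
  equivalent Sf Sg ->
  triv_equiv_set Sf' Sg'.
Proof.
move=> nf ng pf pg [sf ef rf] [sg eg rg] efg.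
have nf' : forall h, h \in Sf' -> h != 0 by move=> h /(fsubsetP sf); apply: nf.
have ng' : forall h, h \in Sg' -> h != 0 by move=> h /(fsubsetP sg); apply: ng.
have yf : exists y, forall h, h \in Sf' -> 0 < lin_eval h y.
  have [y Hy] := pure_pt pf; exists y => h /(fsubsetP sf); apply: Hy.
have yg : exists y, forall h, h \in Sg' -> 0 < lin_eval h y.
  have [y Hy] := pure_pt pg; exists y => h /(fsubsetP sg); apply: Hy.
have E : forall x, solution Sf' x <-> solution Sg' x.
  move=> x; split => H.
    by apply/(eg x).2/(efg x).1/(ef x).1.
  by apply/(ef x).2/(efg x).2/(eg x).1.
have E' : forall x, solution Sg' x <-> solution Sf' x.
  by move=> x; split => /(E x).
have card_le : forall (A B : {fset 'rV[R]_n}),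
    (forall h, ~ redundant A h) ->
    (forall f, f \in A -> exists2 g, g \in B & triv_equiv_ineq f g) ->
    (#|` A| <= #|` B|)%N.
  move=> A B rA HAB.
  have H : forall f, exists g, f \in A -> g \in B /\ triv_equiv_ineq f g.
    move=> f; case: (pselect (f \in A)) => fA; last by exists 0.
    by have [g gB tg] := HAB f fA; exists g.
  have [phi Hphi] := choice H.
  have inj : {in A &, injective phi}.
    move=> f1 f2 f1A f2A e; apply: contrapT => ne.
    have [_ [c1 [c1p e1]]] := Hphi f1 f1A.
    have [_ [c2 [c2p e2]]] := Hphi f2 f2A.
    apply: (rA f1); split => // x Hx.
    have : 0 <= lin_eval f2 x by apply: Hx; rewrite in_fsetD1 f2A andbT; apply/eqP => /esym.
    rewrite e1 e2 e linZl => h2; rewrite linZl.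
    have : 0 <= lin_eval (phi f2) x.
      by move: h2; rewrite pmulr_rge0.
    by move=> h; rewrite mulr_ge0 // ltW.
  have ce : #|` phi @` A| = #|` A| by apply/eqP/card_in_imfsetP.
  have sub : phi @` A `<=` B.
    apply/fsubsetP => g /imfsetP [f /= fA ->]; by have [] := Hphi f fA.
  by have := fsubset_leq_card sub; rewrite ce.
split.
- apply/eqP; rewrite eqn_leq; apply/andP; split.
    apply: card_le => // f fS; exact: (facet nf' ng' yf rf E fS).
  apply: card_le => // f fS; exact: (facet ng' nf' yg rg E' fS).
- move=> f fS; exact: (facet nf' ng' yf rf E fS).
- move=> f fS; exact: (facet ng' nf' yg rg E' fS).
Qed.
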